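(* Let $H$ be a group such that the cardinal $|H|$ has uncountable cofinality. Then the following are equivalent: (1) $H$ is strongly bounded and J\'onsson; (2) for every $Y \subseteq H$ with $|Y| = |H|$ there exists $n_Y \in \omega$ such that $H = Y^{[n_Y]}$.
   Context: A group $H$ is J\'onsson if every proper subgroup of $H$ has cardinality strictly smaller than $|H|$. A group $H$ is strongly bounded if every action of $H$ by isometries on a metric space has bounded orbits. For $Y \subseteq H$, $Y^{[n]}$ denotes the set of all products $g_1^{\varepsilon_1}\cdots g_m^{\varepsilon_m}$ with $0 \le m \le n$, $g_i \in Y$, $\varepsilon_i \in \{-1,1\}$ (the empty product being $1_H$). The cofinality of a cardinal $\kappa$ is the least cardinality of an unbounded subset of $\kappa$. *)

(* Defs.v *)
From HB Require Import structures.
From mathcomp Require Import all_boot.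
From mathcomp Require Import boolp classical_sets cardinality.
From Stdlib Require Import Reals.
Set Implicit Arguments. Unset Strict Implicit. Unset Printing Implicit Defensive.
Local Open Scope classical_set_scope.
Local Open Scope card_scope.

Record AbsGroup := MkGroup {
  gcar :> Type;
  gmul : gcar -> gcar -> gcar;
  ginv : gcar -> gcar;
  gone : gcar;
  gmulA : forall x y z, gmul x (gmul y z) = gmul (gmul x y) z;
  gmul1l : forall x, gmul gone x = x;
  gmul1r : forall x, gmul x gone = x;
  gmulVl : forall x, gmul (ginv x) x = gone;
  gmulVr : forall x, gmul x (ginv x) = gone
}.

Section Defs.
Variable H : AbsGroup.

Definition is_subgroup (S : set H) : Prop :=
  S (gone H) /\ (forall x y, S x -> S y -> S (gmul x y)) /\
  (forall x, S x -> S (ginv x)).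

Definition card_lt_H (A : set H) : Prop :=
  (A #<= [set: H]) /\ ~ ([set: H] #<= A).

Definition Jonsson : Prop :=
  forall S : set H, is_subgroup S -> S <> [set: H] -> card_lt_H S.

Definition is_metric (X : Type) (d : X -> X -> R) : Prop :=
  (forall x y, (0 <= d x y)%R) /\
  (forall x y, d x y = 0%R <-> x = y) /\
  (forall x y, d x y = d y x) /\
  (forall x y z, (d x z <= d x y + d y z)%R).

Definition isometric_action (X : Type) (d : X -> X -> R) (act : H -> X -> X) : Prop :=
  (forall x, act (gone H) x = x) /\
  (forall g h x, act (gmul g h) x = act g (act h x)) /\
  (forall g x y, d (act g x) (act g y) = d x y).

Definition bounded_orbits (X : Type) (d : X -> X -> R) (act : H -> X -> X) : Prop :=
  forall x : X, exists M : R, forall g : H, (d x (act g x) <= M)%R.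

Definition strongly_bounded : Prop :=
  forall (X : Type) (d : X -> X -> R) (act : H -> X -> X),
    is_metric d -> isometric_action d act -> bounded_orbits d act.

(* Y^[n]: products g_1^{e_1} ... g_m^{e_m}, m <= n, g_i in Y, e_i in {-1,1}
   (true = exponent 1, false = exponent -1); the empty product is 1. *)
Definition sgn_pow (p : H * bool) : H := if p.2 then p.1 else ginv p.1.

Definition word_prod (l : seq (H * bool)) : H :=
  foldr (fun p acc => gmul (sgn_pow p) acc) (gone H) l.

Definition word_ball (Y : set H) (n : nat) : set H :=
  [set x | exists l : seq (H * bool),
      (size l <= n)%N /\ (forall p, List.In p l -> Y p.1) /\ x = word_prod l].

(* Cardinals are von Neumann
   initial ordinals; we transport |H| onto H via a strict well-ordering R of
   H of order type |H| (every proper initial segment has cardinality < |H|).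
   Unbounded subsets of |H| then correspond to cofinal subsets of (H, R), and
   "cf(|H|) is uncountable" says every countable subset of H is bounded,
   i.e. has a strict upper bound in (H, R). *)
Definition strict_well_order (Rl : H -> H -> Prop) : Prop :=
  (forall x, ~ Rl x x) /\
  (forall x y z, Rl x y -> Rl y z -> Rl x z) /\
  (forall x y, Rl x y \/ x = y \/ Rl y x) /\
  well_founded Rl.

Definition uncountable_cofinality : Prop :=
  exists Rl : H -> H -> Prop,
    strict_well_order Rl /\
    (forall a : H, card_lt_H [set x | Rl x a]) /\
    (forall X : set H, countable X -> exists a : H, forall x, X x -> Rl x a).

End Defs.

(* Main.v *)
Require Import Defs.
From mathcomp Require Import all_boot.
From mathcomp Require Import boolp classical_sets cardinality.
From mathcomp Require Import functions.
From Stdlib Require Import Reals Lra ClassicalEpsilon.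
Local Open Scope classical_set_scope.
Local Open Scope card_scope.
Set Implicit Arguments. Unset Strict Implicit. Unset Printing Implicit Defensive.

Lemma inj_le T U (A : set T) (B : set U) (f : T -> U) :
  (forall x, A x -> B (f x)) ->
  (forall x y, A x -> A y -> f x = f y -> x = y) -> A #<= B.
Proof.
move=> fAB finj.
have [g] : $|{injfun A >-> B}|.
  apply/injfunPex; exists f.
    by move=> x /fAB.
  by move=> x y; rewrite !inE => Ax Ay; apply: finj.
exact: inj_card_le.
Qed.

Lemma min_ex (T : Type) (Rl : T -> T -> Prop) (wf : well_founded Rl) (P : T -> Prop) :
  (exists x, P x) -> exists m, P m /\ forall z, Rl z m -> ~ P z.
Proof.
move=> [x Px]; apply: contrapT => nomin.
have : forall y, ~ P y.
  apply: (well_founded_ind wf (fun y => ~ P y)) => y IH Py.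
  by apply: nomin; exists y; split=> // z Rz; apply: IH.
by move=> /(_ x).
Qed.

Definition recF (H : AbsGroup) (Rl : H -> H -> Prop) (A : set H)
  (y : H) (rec : forall z, Rl z y -> H) : H :=
  epsilon (inhabits (gone H)) (fun a => A a /\ forall z (p : Rl z y), rec z p <> a).

Lemma K1 (H : AbsGroup) (Rl : H -> H -> Prop) (wf : well_founded Rl)
  (irr : forall x, ~ Rl x x) (tri : forall x y, Rl x y \/ x = y \/ Rl y x)
  (A : set H) :
  [set: H] #<= A \/ exists y (f : H -> H), (forall a, A a -> Rl (f a) y) /\
     (forall a b, A a -> A b -> f a = f b -> a = b).
Proof.
pose e := Fix wf (fun _ => H) (@recF H Rl A).
have eE : forall y : H, e y = @recF H Rl A y (fun z _ => e z).
  move=> y; rewrite /e; apply: (@Fix_eq H Rl wf (fun _ => H) (@recF H Rl A)) => x f g fg.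
  rewrite /recF; congr epsilon; apply: functional_extensionality_dep => a.
  by apply: propositional_extensionality; split=> -[Aa h]; split=> // z p;
     [rewrite -fg|rewrite fg]; apply: h.
case: (classic (forall y, exists a, A a /\ forall z, Rl z y -> e z <> a)) => [hy|ny].
  left.
  have es : forall y, A (e y) /\ forall z, Rl z y -> e z <> e y.
    move=> y; rewrite [e y]eE /recF.
    have [a [Aa ha]] := hy y.
    have := @epsilon_spec H (inhabits (gone H))
      (fun a => A a /\ forall z (p : Rl z y), e z <> a).
    case=> [|Ae hz]; first by exists a; split=> // z p; apply: ha.
    by split=> // z p; apply: hz.
  apply: (inj_le (f := e)) => [y _|x y _ _ exy]; first exact: (es y).1.
  case: (tri x y) => [xy|[//|yx]].
    by case: ((es y).2 x xy).
  by case: ((es x).2 y yx).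
right.
have [y hy] : exists y, forall a, A a -> exists z, Rl z y /\ e z = a.
  apply: contrapT => nex; apply: ny => y.
  apply: contrapT => nay; apply: nex; exists y => a Aa.
  apply: contrapT => nz; apply: nay; exists a; split=> // z zy eza.
  by apply: nz; exists z.
pose f := fun a => epsilon (inhabits (gone H)) (fun z => Rl z y /\ e z = a).
have fs : forall a, A a -> Rl (f a) y /\ e (f a) = a.
  move=> a Aa; exact: (epsilon_spec (inhabits (gone H)) _ (hy a Aa)).
exists y, f; split=> [a Aa|a b Aa Ab fab]; first exact: (fs a Aa).1.
by rewrite -(fs a Aa).2 -(fs b Ab).2 fab.
Qed.

Definition succw (H : AbsGroup) (Rl : H -> H -> Prop) (x : H) : H :=
  epsilon (inhabits (gone H)) (fun m => Rl x m /\ forall z, Rl z m -> ~ Rl x z).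

Lemma countable_range (T : Type) (f : nat -> T) : countable (range f).
Proof.
rewrite /countable; apply: card_le_trans (card_image_le f [set: nat]) _.
exact: card_lexx.
Qed.

Lemma K2 (H : AbsGroup) (Rl : H -> H -> Prop) (wf : well_founded Rl)
  (irr : forall x, ~ Rl x x) (trans : forall x y z, Rl x y -> Rl y z -> Rl x z)
  (tri : forall x y, Rl x y \/ x = y \/ Rl y x)
  (cof : forall X : set H, countable X -> exists a : H, forall x, X x -> Rl x a)
  (a : H) :
  exists b (F : nat -> H -> H), (forall k x, Rl x a -> Rl (F k x) b) /\
    (forall k k' x x', Rl x a -> Rl x' a -> F k x = F k' x' -> k = k' /\ x = x').
Proof.
pose s := succw Rl.
have sS : forall x, Rl x (s x) /\ forall z, Rl z (s x) -> ~ Rl x z.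
  move=> x; apply: (epsilon_spec (inhabits (gone H)) (fun m => Rl x m /\ forall z, Rl z m -> ~ Rl x z)).
  apply: (min_ex wf (P := fun m => Rl x m)).
  have [c hc] := cof [set x] (countable1 x).
  by exists c; apply: hc.
have s_le : forall x y, Rl x y -> s x = y \/ Rl (s x) y.
  move=> x y xy; case: (tri (s x) y) => [h|[h|h]]; [by right|by left|].
  by case: ((sS x).2 y h xy).
have s_mono : forall x y, Rl x y -> Rl (s x) (s y).
  move=> x y xy; case: (s_le x y xy) => [->|h]; first exact: (sS y).1.
  exact: trans h (sS y).1.
have s_inj : forall x y, s x = s y -> x = y.
  move=> x y e; case: (tri x y) => [h|[//|h]].
    by have := s_mono _ _ h; rewrite e => /irr.
  by have := s_mono _ _ h; rewrite e => /irr.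
have it_mono : forall n x y, Rl x y -> Rl (iter n s x) (iter n s y).
  by elim=> [|n IH] x y xy //=; apply: s_mono; apply: IH.
have it_ge : forall n x, x = iter n s x \/ Rl x (iter n s x).
  elim=> [|n IH] x /=; first by left.
  right; case: (IH x) => [<-|h]; first exact: (sS x).1.
  exact: trans h (sS _).1.
pose ns := fun l => forall y, s y <> l.
have dec : forall x, exists pr : H * nat, ns pr.1 /\ x = iter pr.2 s pr.1.
  apply: (well_founded_ind wf) => x IH.
  case: (classic (exists y, s y = x)) => [[y sy]|nx]; first subst x.
    have [[l n] [nl ->]] := IH y (sS y).1.
    by exists (l, n.+1).
  exists (x, 0%N); split=> //= y syx; apply: nx; by exists y.
have uniq : forall n m l l', ns l -> ns l' -> iter n s l = iter m s l' -> n = m /\ l = l'.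
  elim=> [|n IH] [|m] l l' nl nl' /= e.
  - by split.
  - by case: (nl (iter m s l')); rewrite e.
  - by case: (nl' (iter n s l)).
  - by have [-> ->] := IH m l l' nl nl' (s_inj _ _ e).
pose dx := fun x => epsilon (inhabits (gone H, 0%N))
              (fun pr : H * nat => ns pr.1 /\ x = iter pr.2 s pr.1).
have dxS : forall x, ns (dx x).1 /\ x = iter (dx x).2 s (dx x).1.
  by move=> x; apply: (epsilon_spec (inhabits (gone H, 0%N)) (fun pr : H * nat => ns pr.1 /\ x = iter pr.2 s pr.1)); apply: dec.
have [b hb] := cof (range (fun p => iter p s a)) (countable_range _).
pose F := fun (k : nat) x => iter (pickle (k, (dx x).2)) s (dx x).1.
exists b, F; split.
  move=> k x xa; rewrite /F.
  have lx : Rl (dx x).1 a.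
    have [h|h] := it_ge (dx x).2 (dx x).1; rewrite -(dxS x).2 in h; first by rewrite h.
    exact: trans h xa.
  apply: trans (it_mono _ _ _ lx) _.
  by apply: hb; exists (pickle (k, (dx x).2)).
move=> k k' x x' _ _; rewrite /F => e.
have [ep el] := uniq _ _ _ _ (dxS x).1 (dxS x').1 e.
have := pcan_inj (@pickleK (prod nat nat)) ep; case=> -> en; split=> //.
by rewrite (dxS x).2 (dxS x').2 en el.
Qed.

Lemma inv_uniq (H : AbsGroup) (a b : H) : gmul a b = gone H -> b = ginv a.
Proof.
move=> e; rewrite -(gmul1l b) -(gmulVl a) -gmulA e gmul1r //.
Qed.

Lemma ginvM (H : AbsGroup) (a b : H) : ginv (gmul a b) = gmul (ginv b) (ginv a).
Proof.
symmetry; apply: inv_uniq.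
by rewrite -gmulA (gmulA b) gmulVr gmul1l gmulVr.
Qed.

Lemma ginvK (H : AbsGroup) (a : H) : ginv (ginv a) = a.
Proof. by symmetry; apply: inv_uniq; rewrite gmulVl. Qed.

Lemma ginv1 (H : AbsGroup) : ginv (gone H) = gone H.
Proof. by symmetry; apply: inv_uniq; rewrite gmul1l. Qed.

Lemma word_prod_cat (H : AbsGroup) (l1 l2 : seq (H * bool)) :
  word_prod (l1 ++ l2) = gmul (word_prod l1) (word_prod l2).
Proof.
elim: l1 => [|p l IH] /=; first by rewrite gmul1l.
by rewrite IH gmulA.
Qed.

Definition flipw (H : AbsGroup) (l : seq (H * bool)) : seq (H * bool) :=
  map (fun p => (p.1, ~~ p.2)) (rev l).

Lemma word_prod_flip (H : AbsGroup) (l : seq (H * bool)) :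
  word_prod (flipw l) = ginv (word_prod l).
Proof.
elim: l => [|p l IH] /=; first by rewrite ginv1.
rewrite /flipw rev_cons -cats1 map_cat word_prod_cat -/(flipw l) IH /=.
rewrite gmul1r ginvM; congr gmul.
by case: p => g [] /=; rewrite ?ginvK.
Qed.

Lemma word_ball_mul (H : AbsGroup) (Y : set H) m n x y :
  word_ball Y m x -> word_ball Y n y -> word_ball Y (m + n) (gmul x y).
Proof.
move=> [l1 [s1 [Y1 ->]]] [l2 [s2 [Y2 ->]]].
exists (l1 ++ l2); split; first by rewrite size_cat leq_add.
split; last by rewrite word_prod_cat.
by move=> p pin; case: (List.in_app_or _ _ _ pin) => [/Y1|/Y2].
Qed.

Lemma In_rcons T (x y : T) l : List.In x (rcons l y) -> List.In x l \/ x = y.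
Proof.
elim: l => [|z l IH] /=; first by case=> [->|[]]; right.
case=> [->|/IH [h|h]]; by [left; left | left; right | right].
Qed.

Lemma In_rev_ssr T (x : T) l : List.In x (rev l) -> List.In x l.
Proof.
elim: l => [|z l IH] //=; rewrite rev_cons => h.
by case: (In_rcons h) => [/IH h'|->]; [right|left].
Qed.

Lemma word_ball_inv (H : AbsGroup) (Y : set H) n x :
  word_ball Y n x -> word_ball Y n (ginv x).
Proof.
move=> [l [s [Yl ->]]]; exists (flipw l); split.
  by rewrite /flipw size_map size_rev.
split; last by rewrite word_prod_flip.
move=> p pin; have [q [<- qin]] := proj1 (List.in_map_iff _ _ _) pin; by apply: (Yl q); exact: In_rev_ssr.
Qed.

Lemma word_ball_le (H : AbsGroup) (Y : set H) m n x :
  (m <= n)%N -> word_ball Y m x -> word_ball Y n x.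
Proof.
move=> mn [l [s [Yl ->]]]; exists l; split=> //; exact: leq_trans s mn.
Qed.

Lemma word_ball0 (H : AbsGroup) (Y : set H) x : word_ball Y 0 x -> x = gone H.
Proof. by move=> [[|p l] [s [_ ->]]]. Qed.

Lemma word_ball_one (H : AbsGroup) (Y : set H) n : word_ball Y n (gone H).
Proof. by exists [::]. Qed.

Lemma word_ball_gen (H : AbsGroup) (Y : set H) y : Y y -> word_ball Y 1 y.
Proof.
move=> Yy; exists [:: (y, true)]; split=> //; split; last by rewrite /= gmul1r.
by move=> p [<-|[]].
Qed.

Lemma word_ball_sub (H : AbsGroup) (S : set H) n x :
  is_subgroup S -> word_ball S n x -> S x.
Proof.
move=> [S1 [SM SV]] [l [_ [Sl ->]]]; elim: l Sl => [|p l IH] Sl //=.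
apply: SM; last by apply: IH => q ql; apply: Sl; right.
have := Sl p (or_introl erefl); rewrite /sgn_pow; case: p.2 => //; exact: SV.
Qed.

Lemma inv_eq1 (H : AbsGroup) (x y : H) : gmul (ginv x) y = gone H -> x = y.
Proof. by move=> /inv_uniq ->; rewrite ginvK. Qed.

Lemma dir12 (H : AbsGroup) : strongly_bounded H -> Jonsson H ->
  forall Y : set H, Y #= [set: H] -> exists nY : nat, word_ball Y nY = [set: H].
Proof.
move=> sb jo Y YH.
pose G := fun x : H => exists n, word_ball Y n x.
have Gsub : is_subgroup G.
  split; first by exists 0%N; apply: word_ball_one.
  split; first by move=> x y [m hm] [n hn]; exists (m + n)%N; apply: word_ball_mul.
  by move=> x [n hn]; exists n; apply: word_ball_inv.
have GT : G = [set: H].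
  apply: contrapT => GnT.
  have [_ nle] := jo G Gsub GnT; apply: nle.
  have [_ TY] := proj1 (card_eqPle _ _) YH.
  apply: card_le_trans TY _; apply: subset_card_le => y Yy.
  by exists 1%N; apply: word_ball_gen.
have hG : forall z, exists n, `[< word_ball Y n z >].
  move=> z; have : G z by rewrite GT.
  by move=> [n hn]; exists n; apply/asboolP.
pose len z := ex_minn (hG z).
have lenP : forall z, word_ball Y (len z) z.
  by move=> z; rewrite /len; case: ex_minnP => m /asboolP.
have len_min : forall z n, word_ball Y n z -> (len z <= n)%N.
  move=> z n h; rewrite /len; case: ex_minnP => m _; apply; exact/asboolP.
pose d := fun x y : H => INR (len (gmul (ginv x) y)).
pose act := fun g x : H => gmul g x.
have met : is_metric d.
  split; first by move=> x y; apply: pos_INR.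
  split.
    move=> x y; split.
      move=> e; apply: inv_eq1; apply: (word_ball0 (Y := Y)).
      have e0 : len (gmul (ginv x) y) = 0%N by apply: INR_eq; exact: e.
      by rewrite -e0; apply: lenP.
    move=> <-; rewrite /d gmulVl.
    have : (len (gone H) <= 0)%N by apply: len_min; apply: word_ball_one.
    by rewrite leqn0 => /eqP ->.
  split.
    move=> x y; rewrite /d; congr INR.
    have e : gmul (ginv y) x = ginv (gmul (ginv x) y) by rewrite ginvM ginvK.
    rewrite e; apply/eqP; rewrite eqn_leq; apply/andP; split.
      by apply: len_min; have := word_ball_inv (lenP (ginv (gmul (ginv x) y))); rewrite ginvK.
    by apply: len_min; apply: word_ball_inv; apply: lenP.
  move=> x y z; rewrite /d.
  have e : gmul (ginv x) z = gmul (gmul (ginv x) y) (gmul (ginv y) z).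
    by rewrite -gmulA (gmulA y) gmulVr gmul1l.
  have h : (len (gmul (ginv x) z) <= len (gmul (ginv x) y) + len (gmul (ginv y) z))%N.
    by rewrite e; apply: len_min; apply: word_ball_mul; apply: lenP.
  rewrite -plus_INR; apply: le_INR; exact/leP.
have iso : isometric_action d act.
  split; first by move=> x; rewrite /act gmul1l.
  split; first by move=> g h x; rewrite /act gmulA.
  move=> g x y; rewrite /d /act ginvM -gmulA (gmulA (ginv g)) gmulVl gmul1l //.
have [M hM] := sb H d act met iso (gone H).
have [n hn] := INR_archimed 1 M Rlt_0_1.
exists n; apply/seteqP; split=> // g _.
have := hM g; rewrite /d /act ginv1 gmul1l gmul1r => hg.
have lt : (INR (len g) < INR n)%R by lra.
apply: word_ball_le (lenP g).
by apply/ltnW/ltP; apply: INR_lt.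
Qed.

Lemma word_bound (H : AbsGroup) (X : Type) (d : X -> X -> R) (act : H -> X -> X)
  (x : X) (k : R) (l : seq (H * bool)) :
  is_metric d -> isometric_action d act ->
  (forall p, List.In p l -> (d x (act p.1 x) <= k)%R) ->
  (d x (act (word_prod l) x) <= INR (size l) * k)%R.
Proof.
move=> [d0 [dE [dS dT]]] [a1 [aM aI]].
elim: l => [|p l IH] hl.
  rewrite /= a1; have -> : d x x = 0%R by apply/dE.
  lra.
rewrite [word_prod _]/= aM.
have hp : (d x (act (sgn_pow p) x) <= k)%R.
  rewrite /sgn_pow; case: p.2; first exact: hl p (or_introl erefl).
  rewrite -(aI p.1) -aM gmulVr a1 dS; exact: hl p (or_introl erefl).
have hl' : (d x (act (word_prod l) x) <= INR (size l) * k)%R.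
  by apply: IH => q ql; apply: hl; right.
have t := dT x (act (sgn_pow p) x) (act (sgn_pow p) (act (word_prod l) x)).
rewrite aI in t.
have e : INR (size (p :: l)) = (INR (size l) + 1)%R by apply: S_INR.
rewrite e Rmult_plus_distr_r Rmult_1_l; lra.
Qed.

Lemma dir21 (H : AbsGroup)
  (K : forall B : nat -> set H, (forall g, exists k, B k g) ->
         exists k, [set: H] #<= B k) :
  (forall Y : set H, Y #= [set: H] -> exists nY : nat, word_ball Y nY = [set: H]) ->
  strongly_bounded H /\ Jonsson H.
Proof.
move=> h2; split.
  move=> X d act met iso x.
  pose B := fun k (g : H) => (d x (act g x) <= INR k)%R.
  have cov : forall g, exists k, B k g.
    move=> g; have [k hk] := INR_archimed 1 (d x (act g x)) Rlt_0_1.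
    by exists k; rewrite /B; lra.
  have [k hk] := K B cov.
  have [n hn] := h2 (B k) (Cantor_Bernstein (card_leT _) hk).
  exists (INR n * INR k)%R => g.
  have : word_ball (B k) n g by rewrite hn.
  move=> [l [sl [Bl ->]]].
  apply: Rle_trans (word_bound met iso Bl) _.
  apply: Rmult_le_compat_r; first exact: pos_INR.
  by apply: le_INR; apply/leP.
move=> S Ssub SnT; split; first exact: card_leT.
move=> TS.
have [n hn] := h2 S (Cantor_Bernstein (card_leT _) TS).
apply: SnT; apply/seteqP; split=> // y _.
have : word_ball S n y by rewrite hn.
exact: word_ball_sub.
Qed.

Lemma Kmain (H : AbsGroup) : uncountable_cofinality H ->
  forall B : nat -> set H, (forall g, exists k, B k g) ->
    exists k, [set: H] #<= B k.
Proof.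
move=> [Rl [[irr [trans [tri wf]]] [small cof]]] B cov.
apply: contrapT => nk.
pose P := fun k (pr : H * (H -> H)) => (forall a, B k a -> Rl (pr.2 a) pr.1) /\
     (forall a b, B k a -> B k b -> pr.2 a = pr.2 b -> a = b).
pose pr := fun k => epsilon (inhabits (gone H, fun x : H => x)) (P k).
have prS : forall k, P k (pr k).
  move=> k; apply: (epsilon_spec (inhabits (gone H, fun x : H => x)) (P k)).
  case: (K1 wf irr tri (B k)) => [h|[y [f hf]]]; first by case: nk; exists k.
  by exists (y, f).
have [a ha] := cof (range (fun k => (pr k).1)) (countable_range _).
have [b [F [Fb Finj]]] := K2 wf irr trans tri cof a.
pose kg := fun g => epsilon (inhabits 0%N) (fun k => B k g).
have kgS : forall g, B (kg g) g.
  by move=> g; apply: (epsilon_spec (inhabits 0%N) (fun k => B k g)); apply: cov.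
have fa : forall g, Rl ((pr (kg g)).2 g) a.
  move=> g; apply: trans ((prS (kg g)).1 g (kgS g)) _.
  by apply: ha; exists (kg g).
apply: (small b).2.
apply: (inj_le (f := fun g => F (kg g) ((pr (kg g)).2 g))) => [g _|g g' _ _ e].
  exact: Fb.
have [ek ex] := Finj _ _ _ _ (fa g) (fa g') e.
rewrite -ek in ex.
apply: (prS (kg g)).2 ex => //; rewrite ek; exact: kgS.
Qed.

Theorem lemma2p2 (H : AbsGroup) :
  uncountable_cofinality H ->
  ((strongly_bounded H /\ Jonsson H) <->
   (forall Y : set H, Y #= [set: H] ->
      exists nY : nat, word_ball Y nY = [set: H])).
Proof.
move=> unc; split.
  by move=> [sb jo]; apply: dir12.
by apply: dir21; apply: Kmain.
Qed.
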